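(* Define $\mathrm{Mex}(F)=\min(\mathbb{N}_0\setminus F)$ for $F\subseteq\mathbb{N}_0$, and $a+D=\{a+d:d\in D\}$. Define triples $v(n)=(v_1(n),v_2(n),v_3(n))$, $n\ge 0$, recursively by $v(0)=(0,0,0)$ and, for $n\ge 0$, with $F_n=\{v_i(k): 0\le k\le n,\ i\in\{1,2,3\}\}$ and $D_n=\bigcup_{k=0}^{n}\{v_2(k)-v_1(k),\,v_3(k)-v_2(k),\,v_3(k)-v_1(k)\}$, \[ v_1(n+1)=\mathrm{Mex}(F_n),\quad v_2(n+1)=\mathrm{Mex}\big((v_1(n+1)+D_n)\cup\{1,\dots,v_1(n+1)\}\cup F_n\big), \] \[ v_3(n+1)=\mathrm{Mex}\big((v_2(n+1)+D_n)\cup\{1,\dots,v_2(n+1)\}\cup F_n\big). \] Then for every $n\ge 0$, $v_1(n)-2v_2(n)+v_3(n)\in\{0,-1,-2\}$.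
   Context: $\mathbb{N}_0$ denotes the nonnegative integers. *)

(* Defs.v *)
From mathcomp Require Import all_boot all_order all_algebra.
Set Implicit Arguments. Unset Strict Implicit. Unset Printing Implicit Defensive.
Import Order.TTheory GRing.Theory Num.Theory.

Lemma notin_seq_ex (s : seq nat) : exists n, n \notin s.
Proof.
have : exists n, forall m, n <= m -> m \notin s.
  elim: s => [|x s [n Hn]]; first by exists 0.
  exists (maxn n x.+1) => m; rewrite geq_max => /andP [H1 H2].
  rewrite in_cons negb_or (Hn m H1) andbT; apply/eqP => E.
  by rewrite E ltnn in H2.
by case=> n Hn; exists n; apply: Hn.
Qed.

Definition Mex (s : seq nat) : nat :=
  ex_minn (notin_seq_ex s).

Definition triple := (nat * nat * nat)%type.
Definition t1 (t : triple) : nat := t.1.1.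
Definition t2 (t : triple) : nat := t.1.2.
Definition t3 (t : triple) : nat := t.2.

Definition Fset (h : seq triple) : seq nat :=
  flatten [seq [:: t1 t; t2 t; t3 t] | t <- h].

Definition Dset (h : seq triple) : seq int :=
  flatten [seq [:: ((t2 t)%:Z - (t1 t)%:Z)%R; ((t3 t)%:Z - (t2 t)%:Z)%R;
                  ((t3 t)%:Z - (t1 t)%:Z)%R] | t <- h].

(* (a + D) intersected with N0, as a seq of naturals *)
Definition shift (a : nat) (D : seq int) : seq nat :=
  [seq absz (a%:Z + d)%R | d <- D & (0 <= a%:Z + d)%R].

Definition next (h : seq triple) : triple :=
  let F := Fset h in
  let D := Dset h in
  let a := Mex F in
  let b := Mex (shift a D ++ iota 1 a ++ F) in
  let c := Mex (shift b D ++ iota 1 b ++ F) in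
  (a, b, c).

(* hist n = [:: v(0); ...; v(n)] *)
Fixpoint hist (n : nat) : seq triple :=
  match n with
  | 0 => [:: (0, 0, 0)]
  | n'.+1 => rcons (hist n') (next (hist n'))
  end.

Definition v (n : nat) : triple := last (0, 0, 0) (hist n).
Definition v1 n := t1 (v n).
Definition v2 n := t2 (v n).
Definition v3 n := t3 (v n).

(* Main.v *)
Require Import Defs.
From mathcomp Require Import all_boot all_order all_algebra.
From mathcomp Require Import zify.
Import Order.TTheory GRing.Theory Num.Theory.
Set Implicit Arguments. Unset Strict Implicit.

Lemma vS n : v n.+1 = Defs.next (hist n).
Proof. by rewrite /v /= last_rcons. Qed.

Lemma hist_eq n : hist n = [seq v k | k <- iota 0 n.+1].
Proof.
elim: n => [|n IH] //.
rewrite [hist _]/= -vS IH -(addn1 n.+1) iotaD map_cat add0n cats1.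
done.
Qed.

Lemma MexP (s : seq nat) : Mex s \notin s.
Proof. rewrite /Mex; by case: ex_minnP. Qed.

Lemma Mex_min (s : seq nat) y : y < Mex s -> y \in s.
Proof.
rewrite /Mex; case: ex_minnP => m _ Hm Hy.
apply/negPn/negP => Hn; have := Hm _ Hn; lia.
Qed.

Lemma Mex_le (s : seq nat) y : y \notin s -> Mex s <= y.
Proof. rewrite /Mex; case: ex_minnP => m _ Hm; exact: Hm. Qed.

Lemma Mex_eq (s : seq nat) x : x \notin s -> (forall y, y < x -> y \in s) -> Mex s = x.
Proof.
move=> Hx Hy; apply/eqP; rewrite eqn_leq Mex_le //=.
rewrite leqNgt; apply/negP => H; move: (MexP s); by rewrite Hy.
Qed.

Lemma memF n x : x \in Fset (hist n) <->
  exists2 k, k <= n & (x = v1 k \/ x = v2 k \/ x = v3 k).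
Proof.
rewrite hist_eq /Fset; split.
  case/flattenP => s /mapP [t /mapP [k Hk ->] ->].
  rewrite mem_iota in Hk; rewrite !inE => H; exists k; first lia.
  by rewrite /v1 /v2 /v3; move: H => /orP [/eqP ->|/orP [/eqP->|/eqP->]]; auto.
case=> k Hk H; apply/flattenP; exists [:: t1 (v k); t2 (v k); t3 (v k)].
  apply/mapP; exists (v k) => //; apply/mapP; exists k => //; rewrite mem_iota; lia.
by rewrite !inE; case: H => [->|[->|->]]; rewrite eqxx ?orbT.
Qed.

Lemma memD n z : z \in Dset (hist n) <->
  exists2 k, k <= n & (z = ((v2 k)%:Z - (v1 k)%:Z)%R \/ z = ((v3 k)%:Z - (v2 k)%:Z)%R
                     \/ z = ((v3 k)%:Z - (v1 k)%:Z)%R).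
Proof.
rewrite hist_eq /Dset; split.
  case/flattenP => s /mapP [t /mapP [k Hk ->] ->].
  rewrite mem_iota in Hk; rewrite !inE => H; exists k; first lia.
  by rewrite /v1 /v2 /v3; move: H => /orP [/eqP ->|/orP [/eqP->|/eqP->]]; auto.
case=> k Hk H; apply/flattenP.
exists [:: ((t2 (v k))%:Z - (t1 (v k))%:Z)%R; ((t3 (v k))%:Z - (t2 (v k))%:Z)%R;
                  ((t3 (v k))%:Z - (t1 (v k))%:Z)%R].
  apply/mapP; exists (v k) => //; apply/mapP; exists k => //; rewrite mem_iota; lia.
by rewrite !inE; case: H => [->|[->|->]]; rewrite eqxx ?orbT.
Qed.

Lemma mem_shift a D x : (x \in shift a D) = ((x%:Z - a%:Z)%R \in D).
Proof.
apply/idP/idP.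
  case/mapP => d; rewrite mem_filter => /andP [H1 H2] ->.
  have -> : Posz (absz (Posz a + d)%R) = (Posz a + d)%R by rewrite gez0_abs.
  by rewrite addrC addKr.
move=> H; apply/mapP; exists (x%:Z - a%:Z)%R.
  by rewrite mem_filter H andbT addrC subrK.
by rewrite addrC subrK.
Qed.

Lemma v0 : v 0 = (0, 0, 0). Proof. by []. Qed.
Lemma v10 : v1 0 = 0. Proof. by []. Qed.
Lemma v20 : v2 0 = 0. Proof. by []. Qed.
Lemma v30 : v3 0 = 0. Proof. by []. Qed.

Definition inD n e := exists2 k, k <= n &
  (e = v2 k - v1 k \/ e = v3 k - v2 k \/ e = v3 k - v1 k).

Definition ordh n := forall k, k <= n -> v1 k <= v2 k <= v3 k.

Lemma inD_mono i j e : i <= j -> inD i e -> inD j e.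
Proof. move=> Hij [k Hk H]; exists k => //; lia. Qed.

Lemma inD0 n : inD n 0.
Proof. exists 0 => //; left; by rewrite v10 v20. Qed.

Lemma inD_Dset n e : ordh n -> (Posz e \in Dset (hist n)) <-> inD n e.
Proof.
move=> Ho; rewrite memD; split; case=> k Hk H; exists k => //; have := Ho k Hk; lia.
Qed.

Definition Dnat n := [seq absz z | z <- Dset (hist n)].
Definition mD n := Mex (Dnat n).

Lemma mem_Dnat n e : ordh n -> e \in Dnat n <-> inD n e.
Proof.
move=> Ho; split.
  case/mapP => z Hz ->; move/memD: Hz => [k Hk H]; exists k => //.
  have := Ho k Hk; lia.
move=> H; apply/mapP; exists (Posz e) => //; exact/inD_Dset.
Qed.

Lemma mD_notin n : ordh n -> ~ inD n (mD n).
Proof. move=> Ho /(mem_Dnat _ Ho) H; move: (MexP (Dnat n)); by rewrite H. Qed.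

Lemma mD_lt n e : ordh n -> e < mD n -> inD n e.
Proof. move=> Ho H; apply/(mem_Dnat _ Ho); exact: Mex_min. Qed.

Lemma mD_pos n : ordh n -> 0 < mD n.
Proof.
move=> Ho; rewrite lt0n; apply/eqP => E; apply: (mD_notin Ho); rewrite E; exact: inD0.
Qed.

Lemma mD_gt n e : ordh n -> (forall x, x <= e -> inD n x) -> e < mD n.
Proof.
move=> Ho H; rewrite ltnNge; apply/negP => Hle; exact: (mD_notin Ho (H _ Hle)).
Qed.

Lemma Mex_mono (s t : seq nat) : (forall x, x \in s -> x \in t) -> Mex s <= Mex t.
Proof.
move=> H; rewrite leqNgt; apply/negP => Hlt.
move: (MexP t); by rewrite (H _ (Mex_min Hlt)).
Qed.

Lemma v1S n : v1 n.+1 = Mex (Fset (hist n)).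
Proof. by rewrite /v1 vS. Qed.

Lemma v2S n : v2 n.+1 = Mex (shift (v1 n.+1) (Dset (hist n)) ++ iota 1 (v1 n.+1) ++ Fset (hist n)).
Proof. by rewrite v1S /v2 vS. Qed.

Lemma v3S n : v3 n.+1 = Mex (shift (v2 n.+1) (Dset (hist n)) ++ iota 1 (v2 n.+1) ++ Fset (hist n)).
Proof. by rewrite v2S v1S /v3 vS. Qed.

Lemma Fset_mono j n x : j <= n -> x \in Fset (hist j) -> x \in Fset (hist n).
Proof. move=> Hj /memF [k Hk H]; apply/memF; exists k => //; lia. Qed.

Lemma v1_lt n k : k <= n -> v1 k < Mex (Fset (hist n)).
Proof.
move=> Hk.
have Hin : v1 k \in Fset (hist n) by apply/memF; exists k => //; left.
have Hle : v1 k <= Mex (Fset (hist n)).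
  case: k Hk {Hin} => [|j] Hj; first by rewrite v10.
  rewrite v1S; apply: Mex_mono => x; apply: Fset_mono; lia.
rewrite ltn_neqAle Hle andbT; apply/eqP => E.
move: (MexP (Fset (hist n))); by rewrite -E Hin.
Qed.

Lemma memS n a x : ordh n -> a <= x ->
  (x \in shift a (Dset (hist n)) ++ iota 1 a ++ Fset (hist n)) <->
  (inD n (x - a) \/ (0 < x <= a) \/ x \in Fset (hist n)).
Proof.
move=> Ho Hax; rewrite !mem_cat mem_shift mem_iota.
have -> : (Posz x - Posz a)%R = Posz (x - a) by lia.
split.
  case/orP => [/(inD_Dset _ Ho) H|/orP [H|H]]; [by left|right; left; lia|by right; right].
case=> [/(inD_Dset _ Ho) ->//|[H|->]]; last by rewrite !orbT.
apply/orP; right; apply/orP; left; lia.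
Qed.

Definition Inv n := ordh n /\ forall k, 0 < k <= n ->
  [/\ v1 k.-1 < v1 k,
      v3 k - v2 k = mD k.-1,
      v3 k - v2 k <= v2 k - v1 k <= v3 k - v2 k + 2
    & forall e, e <= v2 k - v1 k -> inD k e].

Lemma Inv_le j n : j <= n -> Inv n -> Inv j.
Proof.
move=> Hj [Ho H]; split; first by move=> k Hk; apply: Ho; lia.
move=> k Hk; apply: H; lia.
Qed.

Lemma ordh_le j n : j <= n -> ordh n -> ordh j.
Proof. move=> Hj Ho k Hk; apply: Ho; lia. Qed.

Lemma p_lt n k : Inv n -> k <= n -> v2 k - v1 k < mD n.
Proof.
move=> [Ho H] Hk; apply: mD_gt => // x Hx.
case: k Hk Hx => [|k] Hk Hx.
  rewrite v10 v20 in Hx; have -> : x = 0 by lia. exact: inD0.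
have [_ _ _ H5] := H k.+1 (ltac:(lia)).
apply: (inD_mono (i := k.+1)); first lia.
exact: H5.
Qed.

Lemma q_le_p n k : Inv n -> k <= n -> v3 k - v2 k <= v2 k - v1 k.
Proof.
move=> [Ho H] Hk; case: k Hk => [|k] Hk; first by rewrite v20 v30.
by have [_ _ /andP [-> _] _] := H k.+1 (ltac:(lia)).
Qed.

Lemma q_lt_later n i j : Inv n -> 0 < i -> i < j -> j <= n ->
  v3 i - v2 i < v3 j - v2 j /\ v2 i - v1 i < v2 j - v1 j.
Proof.
move=> HI Hi Hij Hj.
have HI' : Inv j.-1 by apply: (Inv_le (n := n)) => //; lia.
have [Ho H] := HI.
have [_ Eq Hpq _] := H j (ltac:(lia)).
have Hp := p_lt (k := i) HI' (ltac:(lia)).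
have Hq := q_le_p HI' (k := i) (ltac:(lia)).
rewrite Eq; lia.
Qed.

Lemma a_lt_later i j : i < j -> v1 i < v1 j.
Proof.
case: j => [|j] Hij; first lia.
rewrite v1S; apply: v1_lt; lia.
Qed.

Lemma c_sep n i j : Inv n -> 0 < i -> i < j -> j <= n ->
  v3 i + 3 <= v3 j /\ v3 i - v1 i + 2 <= v3 j - v1 j.
Proof.
move=> HI Hi Hij Hj.
have [H1 H2] := q_lt_later HI Hi Hij Hj.
have H3 := a_lt_later Hij.
have [Ho _] := HI.
have := Ho i (ltac:(lia)); have := Ho j Hj; lia.
Qed.

Lemma Inv_step n : Inv n -> Inv n.+1.
Proof.
move=> HI; have [Ho H] := HI.
have Ha : v1 n.+1 = Mex (Fset (hist n)) := v1S n.
have Hm1 : 0 < mD n := mD_pos Ho.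
have HaF : forall k, k <= n -> v1 k < v1 n.+1.
  by move=> k Hk; rewrite Ha; apply: v1_lt.
have Ha0 : 0 < v1 n.+1 by have := HaF 0 (leq0n _); rewrite v10.
have F0 : 0 \in Fset (hist n) by apply/memF; exists 0 => //; left; rewrite v10.
have Fabove : forall x, x \in Fset (hist n) -> v1 n.+1 + mD n <= x.+1 ->
    exists2 k, 0 < k <= n & x = v3 k.
  move=> x /memF [k Hk [E|[E|E]]] Hx.
  - have := HaF k Hk; lia.
  - have := HaF k Hk; have := p_lt HI Hk; have := Ho k Hk; lia.
  - case: k Hk E => [|k] Hk E; first by rewrite v30 in E; lia.
    by exists k.+1.
have Dabove : forall e, inD n e -> mD n <= e -> exists2 k, 0 < k <= n & e = v3 k - v1 k.
  move=> e [k Hk [E|[E|E]]] He.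
  - have := p_lt HI Hk; lia.
  - have := p_lt HI Hk; have := q_le_p HI Hk; lia.
  - case: k Hk E => [|k] Hk E; first by rewrite v30 v10 in E; lia.
    by exists k.+1.
have Hb := v2S n.
have Sin : forall x, x < v1 n.+1 + mD n ->
    x \in shift (v1 n.+1) (Dset (hist n)) ++ iota 1 (v1 n.+1) ++ Fset (hist n).
  move=> x Hx; case: (leqP x (v1 n.+1)) => Hxa.
    rewrite !mem_cat mem_iota; case: x Hx Hxa => [|x] Hx Hxa; first by rewrite F0 !orbT.
    apply/orP; right; apply/orP; left; lia.
  apply/(memS Ho (ltnW Hxa)); left; apply: mD_lt Ho _; lia.
have b_ge : v1 n.+1 + mD n <= v2 n.+1.
  rewrite leqNgt; apply/negP => Hlt; have Hin := Sin _ Hlt.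
  by move: (MexP (shift (v1 n.+1) (Dset (hist n)) ++ iota 1 (v1 n.+1) ++ Fset (hist n))); rewrite -Hb Hin.
have Sout : forall e, mD n <= e -> ~ inD n e -> v1 n.+1 + e \notin Fset (hist n) ->
    v2 n.+1 <= v1 n.+1 + e.
  move=> e He HnD HnF; rewrite Hb; apply: Mex_le; apply/negP.
  move/(memS Ho (leq_addr _ _)); rewrite addKn => [[H1|[H1|H1]]].
  - exact: HnD.
  - lia.
  - by rewrite H1 in HnF.
have b_le : v2 n.+1 <= v1 n.+1 + mD n + 2 /\
    (v2 n.+1 = v1 n.+1 + mD n + 2 -> inD n (mD n).+1).
  case: (boolP (v1 n.+1 + mD n \in Fset (hist n))) => HF.
  - have [k Hk Ek] := Fabove _ HF (ltac:(lia)).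
    have HF1 : forall d, 0 < d <= 2 -> v1 n.+1 + mD n + d \notin Fset (hist n).
      move=> d Hd; apply/negP => HF'.
      have [j Hj Ej] := Fabove _ HF' (ltac:(lia)).
      case: (ltngtP j k) => Hjk.
      - have [] := c_sep HI (i := j) (j := k) (ltac:(lia)) Hjk (ltac:(lia)); lia.
      - have [] := c_sep HI (i := k) (j := j) (ltac:(lia)) Hjk (ltac:(lia)); lia.
      - subst j; lia.
    case: (boolP ((mD n).+1 \in Dnat n)) => HD.
    + move/(mem_Dnat _ Ho): HD => HD.
      have HnD : ~ inD n (mD n).+2.
        move=> HD2.
        have [k1 Hk1 E1] := Dabove _ HD (ltac:(lia)).
        have [k2 Hk2 E2] := Dabove _ HD2 (ltac:(lia)).
        case: (ltngtP k1 k2) => Hk12.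
        - have [] := c_sep HI (i := k1) (j := k2) (ltac:(lia)) Hk12 (ltac:(lia)); lia.
        - have [] := c_sep HI (i := k2) (j := k1) (ltac:(lia)) Hk12 (ltac:(lia)); lia.
        - subst k2; lia.
      have := Sout (mD n).+2 (ltac:(lia)) HnD.
      rewrite -(addn2 (mD n)) addnA HF1 //; move=> /(_ isT) Hle; split => //; lia.
    + have HnD : ~ inD n (mD n).+1 by move/(mem_Dnat _ Ho) => H'; rewrite H' in HD.
      have := Sout (mD n).+1 (ltac:(lia)) HnD.
      rewrite -(addn1 (mD n)) addnA HF1 //; move=> /(_ isT) Hle; split => //; lia.
  - have := Sout (mD n) (leqnn _) (mD_notin Ho) HF => Hle; split => //; lia.
have Hc : v3 n.+1 = v2 n.+1 + mD n.
  rewrite v3S; apply: Mex_eq.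
  - apply/negP; move/(memS Ho (leq_addr _ _)); rewrite addKn => [[H1|[H1|H1]]].
    + exact: mD_notin Ho H1.
    + lia.
    + have [k Hk Ek] := Fabove _ H1 (ltac:(lia)).
      have := HaF k (ltac:(lia)); have := p_lt HI (k := k) (ltac:(lia)).
      have := q_le_p HI (k := k) (ltac:(lia)); have := Ho k (ltac:(lia)); lia.
  - move=> y Hy; case: (leqP y (v2 n.+1)) => Hyb.
      rewrite !mem_cat mem_iota; case: y Hy Hyb => [|y] Hy Hyb; first by rewrite F0 !orbT.
      apply/orP; right; apply/orP; left; lia.
    apply/(memS Ho (ltnW Hyb)); left; apply: mD_lt Ho _; lia.
have [b_le1 b_le2] := b_le.
split.
  move=> k Hk; case: (leqP k n) => Hkn; first exact: Ho.
  have -> : k = n.+1 by lia.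
  lia.
move=> k Hk; case: (leqP k n) => Hkn.
  apply: H; lia.
have -> : k = n.+1 by lia.
split => /=.
- exact: HaF.
- lia.
- lia.
- move=> e He.
  case: (ltnP e (mD n)) => He1.
    apply: (inD_mono (i := n)); [lia | exact: mD_lt Ho He1].
  case: (ltnP (mD n) e) => He2; last first.
    exists n.+1 => //; right; left; lia.
  case: (ltnP e (v2 n.+1 - v1 n.+1)) => He3; last first.
    exists n.+1 => //; left; lia.
  apply: (inD_mono (i := n)); first lia.
  have -> : e = (mD n).+1 by lia.
  apply: b_le2; lia.
Qed.

Lemma Inv_all n : Inv n.
Proof.
elim: n => [|n IH]; last exact: Inv_step.
split; first by move=> k Hk; have -> : k = 0 by lia.
move=> k Hk; lia.
Qed.

Unset Implicit Arguments.

Theorem corollary5 (n : nat) :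
  ((v1 n)%:Z - 2 * (v2 n)%:Z + (v3 n)%:Z)%R \in [:: 0%R; (-1)%R; (-2)%R].
Proof.
case: n => [|n]; first by rewrite v10 v20 v30.
have [Ho H] := Inv_all n.+1.
have [_ _ Hpq _] := H n.+1 (ltac:(lia)).
have := Ho n.+1 (leqnn _).
move: Hpq; set a := v1 n.+1; set b := v2 n.+1; set c := v3 n.+1 => Hpq Hord.
rewrite !inE.
have [E|[E|E]] : (b - a = c - b \/ b - a = (c - b).+1 \/ b - a = (c - b).+2)%N by lia.
- have -> : ((a%:Z - 2 * b%:Z + c%:Z) = 0)%R by lia.
  by rewrite eqxx.
- have -> : ((a%:Z - 2 * b%:Z + c%:Z) = -1)%R by lia.
  by rewrite eqxx orbT.
- have -> : ((a%:Z - 2 * b%:Z + c%:Z) = -2)%R by lia.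
  by rewrite eqxx !orbT.
Qed.
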